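(* Let $p \ge 1$ be an integer. The functions $\overline{\Delta}_{\mathrm{JML1}}$ and $\overline{\Delta}_{\mathrm{JML2}}$ (defined below) are both metrics on $[0,1]^p$. Neither $\overline{\Delta}_{\mathrm{SJL},L^1}$ nor $\overline{\Delta}_{\mathrm{SJL},L^2}$ (defined below) is a metric on $[0,1]^p$.
   Context: For $x,y \in [0,1]^p$ write $\|x\|_1=\sum_{i=1}^p |x_i|$, $\|x\|_2^2=\sum_{i=1}^p x_i^2$ and $\langle x,y\rangle=\sum_{i=1}^p x_iy_i$. Define, for $x,y\in[0,1]^p$: $\overline{\Delta}_{\mathrm{JML1}}(x,y) = 1 - \frac{\|x\|_1+\|y\|_1-\|x-y\|_1}{\|x\|_1+\|y\|_1+\|x-y\|_1}$, $\overline{\Delta}_{\mathrm{JML2}}(x,y) = 1 - \frac{\langle x,y\rangle}{\langle x,y\rangle+\|x-y\|_1}$, $\overline{\Delta}_{\mathrm{SJL},L^1}(x,y) = 1 - \frac{\langle x,y\rangle}{\|x\|_1+\|y\|_1-\langle x,y\rangle}$, $\overline{\Delta}_{\mathrm{SJL},L^2}(x,y) = 1 - \frac{\langle x,y\rangle}{\|x\|_2^2+\|y\|_2^2-\langle x,y\rangle}$. All these denominators vanish only when $x=y=0$; by convention each of these functions takes the value $0$ at $(x,y)=(0,0)$. A mapping $f: M\times M\to\mathbb{R}$ is a metric on $M$ if for all $a,b,c\in M$: $f(a,a)=0$; $a\neq b \Rightarrow f(a,b)>0$; $f(a,b)=f(b,a)$; and $f(a,c)\le f(a,b)+f(b,c)$.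 *)

(* Defs.v *)
From HB Require Import structures.
From mathcomp Require Import all_boot all_order all_algebra.
From mathcomp Require Import reals.
Set Implicit Arguments. Unset Strict Implicit. Unset Printing Implicit Defensive.
Import Order.TTheory GRing.Theory Num.Theory.
Local Open Scope ring_scope.

Section Defs.
Variables (R : realType) (p : nat).
Implicit Types x y : 'rV[R]_p.

Definition in_cube x : Prop := forall i : 'I_p, 0 <= x 0 i <= 1.

Definition norm1 x : R := \sum_(i < p) `|x 0 i|.
Definition norm2sq x : R := \sum_(i < p) x 0 i ^+ 2.
Definition dotp x y : R := \sum_(i < p) x 0 i * y 0 i.

(* each distance is 0 at (0,0) by convention *)
Definition dJML1 x y : R :=
  if (x == 0) && (y == 0) then 0 else
  1 - (norm1 x + norm1 y - norm1 (x - y)) / (norm1 x + norm1 y + norm1 (x - y)).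

Definition dJML2 x y : R :=
  if (x == 0) && (y == 0) then 0 else
  1 - dotp x y / (dotp x y + norm1 (x - y)).

Definition dSJL1 x y : R :=
  if (x == 0) && (y == 0) then 0 else
  1 - dotp x y / (norm1 x + norm1 y - dotp x y).

Definition dSJL2 x y : R :=
  if (x == 0) && (y == 0) then 0 else
  1 - dotp x y / (norm2sq x + norm2sq y - dotp x y).

End Defs.

Definition is_metric_on (T : Type) (R : realType) (M : T -> Prop)
    (f : T -> T -> R) : Prop :=
  (forall a, M a -> f a a = 0) /\
  (forall a b, M a -> M b -> a <> b -> 0 < f a b) /\
  (forall a b, M a -> M b -> f a b = f b a) /\
  (forall a b c, M a -> M b -> M c -> f a c <= f a b + f b c).

(* Main.v *)
Require Import Defs.
From HB Require Import structures.
From mathcomp Require Import all_boot all_order all_algebra.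
From mathcomp Require Import reals ring lra.
Import Order.TTheory GRing.Theory Num.Theory.
Local Open Scope ring_scope.

Lemma frac_mono {R : realFieldType} {c s P : R} : 0 <= c -> c <= s -> 0 <= P ->
  c / (P + c) <= s / (P + s).
Proof.
move=> c0 cs P0.
have [->|Pc] := eqVneq (P + c) 0.
  by rewrite invr0 mulr0 divr_ge0 //; lra.
have Pcp : 0 < P + c by rewrite lt_def Pc /=; lra.
have Ps : 0 < P + s by lra.
rewrite ler_pdivrMr // mulrAC ler_pdivlMr //; nra.
Qed.

Lemma frac_den {R : realFieldType} {a Q D : R} : 0 <= a -> 0 <= Q -> Q + a <= D ->
  a / D <= a / (Q + a).
Proof.
move=> a0 Q0 QD.
have [->|an] := eqVneq a 0; first by rewrite !mul0r.
have ap : 0 < a by rewrite lt_def an.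
have Qp : 0 < Q + a by lra.
have Dp : 0 < D by lra.
rewrite ler_pdivrMr // mulrAC ler_pdivlMr //; nra.
Qed.

Lemma key (R : realFieldType) (a b c Pxy Pyz Pxz : R) :
  0 <= a -> 0 <= b -> 0 <= c -> 0 <= Pxy -> 0 <= Pyz -> 0 <= Pxz ->
  c <= a + b -> Pxy <= Pxz + b -> Pyz <= Pxz + a ->
  c / (Pxz + c) <= a / (Pxy + a) + b / (Pyz + b).
Proof.
move=> a0 b0 c0 P1 P2 P3 cab h1 h2.
have := frac_mono c0 cab P3; rewrite addrA => H; apply: (le_trans H).
rewrite mulrDl; apply: lerD; apply: frac_den => //; lra.
Qed.

Definition is_metric_on' := is_metric_on.

Lemma metric_ext (T : Type) (R : realType) (M : T -> Prop) (f g : T -> T -> R) :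
  (forall a b, M a -> M b -> f a b = g a b) -> is_metric_on M g -> is_metric_on M f.
Proof.
move=> e [h1 [h2 [h3 h4]]]; split; [|split; [|split]].
- by move=> a Ma; rewrite e // h1.
- by move=> a b Ma Mb ab; rewrite e // h2.
- by move=> a b Ma Mb; rewrite !e // h3.
- by move=> a b c Ma Mb Mc; rewrite !e // h4.
Qed.

Lemma metric_gen (T : Type) (R : realType) (M : T -> Prop) (S Q : T -> T -> R) (k : R) :
  0 < k ->
  (forall a, M a -> S a a = 0) ->
  (forall a b, M a -> M b -> a <> b -> 0 < S a b) ->
  (forall a b, M a -> M b -> 0 <= S a b) ->
  (forall a b, M a -> M b -> 0 <= Q a b) ->
  (forall a b, M a -> M b -> S a b = S b a) ->
  (forall a b, M a -> M b -> Q a b = Q b a) ->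
  (forall a b c, M a -> M b -> M c -> S a c <= S a b + S b c) ->
  (forall a b c, M a -> M b -> M c -> Q a b <= Q a c + S b c) ->
  (forall a b c, M a -> M b -> M c -> Q b c <= Q a c + S a b) ->
  is_metric_on M (fun a b => k * (S a b / (Q a b + S a b))).
Proof.
move=> k0 Saa Spos S0 Q0 Ssym Qsym Str Q1 Q2; split; [|split; [|split]].
- by move=> a Ma; rewrite Saa // mul0r mulr0.
- move=> a b Ma Mb ab; apply: mulr_gt0 => //; apply: divr_gt0; first exact: Spos.
  have := Spos a b Ma Mb ab; have := Q0 a b Ma Mb; lra.
- by move=> a b Ma Mb; rewrite Ssym // Qsym.
- move=> a b c Ma Mb Mc; rewrite -mulrDr ler_pM2l //.
  apply: key; auto.
Qed.

Section Vec.
Variables (R : realType) (p : nat).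
Implicit Types x y z : 'rV[R]_p.

Lemma norm1_ge0 x : 0 <= norm1 x.
Proof. by apply: sumr_ge0 => i _. Qed.

Lemma norm1_eq0 x : norm1 x = 0 -> x = 0.
Proof.
move=> h; apply/matrixP => i j; rewrite (ord1 i) mxE; apply/normr0_eq0.
by apply: (psumr_eq0P _ h).
Qed.

Lemma norm10 : norm1 (0 : 'rV[R]_p) = 0.
Proof. by rewrite /norm1 big1 // => i _; rewrite mxE normr0. Qed.

Lemma norm1B x y : norm1 (x - y) = norm1 (y - x).
Proof. by apply: eq_bigr => i _; rewrite !mxE distrC. Qed.

Lemma norm1_tri x y z : norm1 (x - z) <= norm1 (x - y) + norm1 (y - z).
Proof.
rewrite /norm1 -big_split; apply: ler_sum => i _; rewrite !mxE; exact: ler_distD.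
Qed.

Lemma norm1_sub_le y z : norm1 y <= norm1 z + norm1 (y - z).
Proof.
rewrite /norm1 -big_split; apply: ler_sum => i _; rewrite !mxE.
have := ler_distD (z 0 i) (y 0 i) 0; rewrite !subr0 => H. change (`|y 0 i| <= `|z 0 i| + `|y 0 i - z 0 i|). rewrite addrC; exact: H.
Qed.

Lemma dotpC x y : dotp x y = dotp y x.
Proof. by apply: eq_bigr => i _; rewrite mulrC. Qed.

Lemma dotp_ge0 x y : in_cube x -> in_cube y -> 0 <= dotp x y.
Proof.
move=> hx hy; apply: sumr_ge0 => i _; have /andP[? ?] := hx i; have /andP[? ?] := hy i.
exact: mulr_ge0.
Qed.

Lemma dotp_le x y z : in_cube x -> dotp x y <= dotp x z + norm1 (y - z).
Proof.
move=> hx; rewrite /dotp /norm1 -big_split; apply: ler_sum => i _; rewrite !mxE.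
have /andP[h0 h1] := hx i.
change (x 0 i * y 0 i <= x 0 i * z 0 i + `|y 0 i - z 0 i|).
have n1 := ler_norm (y 0 i - z 0 i); have n0 := normr_ge0 (y 0 i - z 0 i).
nra.
Qed.

Lemma dotp_eq0 x : dotp x x = 0 -> x = 0.
Proof.
move=> h; apply/matrixP => i j; rewrite (ord1 i) mxE.
have nn : forall k, xpredT k -> 0 <= x 0 k * x 0 k by move=> k _; rewrite -expr2 sqr_ge0.
have := @psumr_eq0P _ _ xpredT (fun k => x 0 k * x 0 k) nn h j isT.
by move/eqP; rewrite mulf_eq0 orbb => /eqP.
Qed.

Lemma JML1_eq x y : dJML1 x y = 2 * (norm1 (x - y) / ((norm1 x + norm1 y) + norm1 (x - y))).
Proof.
rewrite /dJML1; case: ifP => [/andP[/eqP-> /eqP->]|h].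
  by rewrite subr0 norm10 !mul0r mulr0.
have nx := norm1_ge0 x; have ny := norm1_ge0 y; have nxy := norm1_ge0 (x - y).
have D : norm1 x + norm1 y + norm1 (x - y) != 0.
  apply/eqP => D.
  have hx : norm1 x = 0 by lra.
  have hy : norm1 y = 0 by lra.
  by move: h; rewrite (norm1_eq0 _ hx) (norm1_eq0 _ hy) eqxx.
by field.
Qed.

Lemma JML2_eq x y : in_cube x -> in_cube y ->
  dJML2 x y = 1 * (norm1 (x - y) / (dotp x y + norm1 (x - y))).
Proof.
move=> cx cy; rewrite /dJML2 mul1r; case: ifP => [/andP[/eqP-> /eqP->]|h].
  by rewrite subr0 norm10 !mul0r.
have nxy := norm1_ge0 (x - y); have pxy := dotp_ge0 _ _ cx cy.
have D : dotp x y + norm1 (x - y) != 0.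
  apply/eqP => D.
  have hs : norm1 (x - y) = 0 by lra.
  have hp : dotp x y = 0 by lra.
  have exy : x = y by apply/eqP; rewrite -subr_eq0; apply/eqP/norm1_eq0.
  move: hp; rewrite -exy => /dotp_eq0 x0.
  by move: h; rewrite -exy x0 eqxx.
by field.
Qed.

Lemma sum_cst (c : R) : \sum_(i < p) c = c * p%:R.
Proof. by rewrite sumr_const card_ord mulr_natr. Qed.

Lemma dotp_cst (t s : R) : dotp (const_mx t : 'rV[R]_p) (const_mx s) = t * s * p%:R.
Proof. rewrite /dotp -sum_cst; apply: eq_bigr => i _; by rewrite !mxE. Qed.

Lemma norm1_cst (t : R) : norm1 (const_mx t : 'rV[R]_p) = `|t| * p%:R.
Proof. rewrite /norm1 -sum_cst; apply: eq_bigr => i _; by rewrite !mxE. Qed.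

Lemma norm2sq_cst (t : R) : norm2sq (const_mx t : 'rV[R]_p) = t ^+ 2 * p%:R.
Proof. rewrite /norm2sq -sum_cst; apply: eq_bigr => i _; by rewrite !mxE. Qed.

Lemma cst_neq0 (t : R) : (0 < p)%N -> t != 0 -> (const_mx t : 'rV[R]_p) == 0 = false.
Proof.
move=> hp t0; apply/negbTE/eqP => /matrixP /(_ 0 (Ordinal hp)); rewrite !mxE.
by move/eqP; rewrite (negbTE t0).
Qed.

Lemma cube_cst (t : R) : 0 <= t <= 1 -> in_cube (const_mx t : 'rV[R]_p).
Proof. by move=> h i; rewrite mxE. Qed.

End Vec.

Theorem theorem1 (R : realType) (p : nat) (hp : (1 <= p)%N) :
  is_metric_on (@in_cube R p) (@dJML1 R p) /\
  is_metric_on (@in_cube R p) (@dJML2 R p) /\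
  ~ is_metric_on (@in_cube R p) (@dSJL1 R p) /\
  ~ is_metric_on (@in_cube R p) (@dSJL2 R p).
Proof.
have np : 0 < p%:R :> R by rewrite ltr0n.
split; [|split; [|split]].
- apply: (@metric_ext _ _ _ _ (fun a b => 2 * (norm1 (a - b) / ((norm1 a + norm1 b) + norm1 (a - b))))).
    by move=> a b _ _; apply: JML1_eq.
  apply: metric_gen => //.
  + by move=> a _; rewrite subrr norm10.
  + move=> a b _ _ ab; rewrite lt_def norm1_ge0 andbT; apply/eqP => /norm1_eq0 /eqP.
    by rewrite subr_eq0 => /eqP.
  + by move=> a b _ _; apply: norm1_ge0.
  + by move=> a b _ _; rewrite addr_ge0 // norm1_ge0.
  + by move=> a b _ _; rewrite norm1B.
  + by move=> a b _ _; rewrite addrC.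
  + by move=> a b c _ _ _; apply: norm1_tri.
  + move=> a b c _ _ _; have := norm1_sub_le _ _ b c; lra.
  + move=> a b c _ _ _; have := norm1_sub_le _ _ b a; rewrite norm1B; lra.
- apply: (@metric_ext _ _ _ _ (fun a b => 1 * (norm1 (a - b) / (dotp a b + norm1 (a - b))))).
    by move=> a b ca cb; apply: JML2_eq.
  apply: metric_gen => //.
  + by move=> a _; rewrite subrr norm10.
  + move=> a b _ _ ab; rewrite lt_def norm1_ge0 andbT; apply/eqP => /norm1_eq0 /eqP.
    by rewrite subr_eq0 => /eqP.
  + by move=> a b _ _; apply: norm1_ge0.
  + by move=> a b ca cb; apply: dotp_ge0.
  + by move=> a b _ _; rewrite norm1B.
  + by move=> a b _ _; rewrite dotpC.
  + by move=> a b c _ _ _; apply: norm1_tri.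
  + by move=> a b c ca _ _; apply: dotp_le.
  + move=> a b c ca cb cc; rewrite (dotpC _ _ b) (dotpC _ _ a) norm1B; exact: dotp_le.
- case=> h _.
  have c2 : in_cube (const_mx (2^-1 : R) : 'rV[R]_p) by apply: cube_cst; apply/andP; split; lra.
  have := h _ c2.
  rewrite /dSJL1 cst_neq0 //=; last by lra.
  rewrite dotp_cst norm1_cst ger0_norm; last by lra.
  have : (1 : R) - 2^-1 * 2^-1 * p%:R / (2^-1 * p%:R + 2^-1 * p%:R - 2^-1 * 2^-1 * p%:R) = 2/3.
    by field; lra.
  move=> ->; lra.
- case=> _ [_ [_ h]].
  have c1 : in_cube (const_mx (1 : R) : 'rV[R]_p) by apply: cube_cst; apply/andP; split; lra.
  have c2 : in_cube (const_mx (2^-1 : R) : 'rV[R]_p) by apply: cube_cst; apply/andP; split; lra.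
  have c4 : in_cube (const_mx (4^-1 : R) : 'rV[R]_p) by apply: cube_cst; apply/andP; split; lra.
  have := h _ _ _ c1 c2 c4.
  rewrite /dSJL2 !cst_neq0 //=; try lra.
  rewrite !dotp_cst !norm2sq_cst.
  have -> : (1 : R) - 1 / 4 * p%:R / (1 ^+ 2 * p%:R + 4^-1 ^+ 2 * p%:R - 1 / 4 * p%:R) = 9/13.
    by field; lra.
  have -> : (1 : R) - 1 / 2 * p%:R / (1 ^+ 2 * p%:R + 2^-1 ^+ 2 * p%:R - 1 / 2 * p%:R) = 1/3.
    by field; lra.
  have -> : (1 : R) - 2^-1 / 4 * p%:R / (2^-1 ^+ 2 * p%:R + 4^-1 ^+ 2 * p%:R - 2^-1 / 4 * p%:R) = 1/3.
    by field; lra.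
  lra.
Qed.
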